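(* For $n=4$ agents, $\hat r_4=r_4=\frac{13}{9}$, whereas $\rho_4\ge\frac{10}{7}$.
   Context: Equal responsibilities; chores $e_1,\ldots,e_m$. A picking order $S\in[n]^m$ allocates $A_i(S)=\{e_r:S_r=i\}$ to agent $i$ (equivalently, agents following greedy in the reversed picking sequence on an identically ordered instance). For additive $c_i\ge0$ with $c_i(e_1)\ge c_i(e_2)\ge\cdots$: $CS_i=\max\{\frac1nc_i(\{e_1,\ldots,e_m\}),c_i(e_1),c_i(e_n)+c_i(e_{n+1})\}$ (zeros beyond $m$) and $MMS_i=\min_{(A_1,\ldots,A_n)}\max_jc_i(A_j)$. $r_{n,m}(S)=\sup_i\sup_{c_i}c_i(A_i(S))/CS_i$, $\rho_{n,m}(S)=\sup_i\sup_{c_i}c_i(A_i(S))/MMS_i$. $r_{n,m}=\min_S r_{n,m}(S)$ and $\rho_{n,m}=\min_S\rho_{n,m}(S)$ over all picking orders of length $m$; $\hat r_{n,m}$ is the minimum of $r_{n,m}(S)$ over ridge picking orders only ($S_r=r$, $S_{n+r}=n-r+1$ for $1\le r\le n$, $m\ge2n$). $r_n=\sup_m r_{n,m}$, $\rho_n=\sup_m\rho_{n,m}$, $\hat r_n=\sup_{m\ge2n}\hat r_{n,m}$. *)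

(* Defs.v *)
From HB Require Import structures.
From mathcomp Require Import all_boot all_order all_algebra.
From mathcomp Require Import boolp classical_sets reals.

Set Implicit Arguments.
Unset Strict Implicit.
Unset Printing Implicit Defensive.

Import Order.TTheory GRing.Theory Num.Theory.
Local Open Scope ring_scope.
Local Open Scope classical_set_scope.

(* Agents are 'I_n (agent i+1 of the paper is i), chores are 'I_m
   (chore e_(r+1) of the paper is r).  A picking order S in [n]^m is a
   finite function 'I_m -> 'I_n; it allocates A_i(S) = {r | S r = i}. *)

Section ChoreDivision.
Context (R : realType).

Definition picking_order (n m : nat) := {ffun 'I_m -> 'I_n}.

Definition bundle_cost (n m : nat) (c : 'I_m -> R) (S : 'I_m -> 'I_n)
    (i : 'I_n) : R :=
  \sum_(r < m | S r == i) c r.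

Definition valid_cost (m : nat) (c : 'I_m -> R) : Prop :=
  (forall r, 0 <= c r) /\ (forall r s : 'I_m, (r <= s)%N -> c s <= c r).

Definition cost_ext (m : nat) (c : 'I_m -> R) (k : nat) : R :=
  match (insub k : option 'I_m) with Some r => c r | None => 0 end.

Definition CS (n m : nat) (c : 'I_m -> R) : R :=
  Num.max (Num.max ((\sum_(r < m) c r) / n%:R) (cost_ext c 0))
          (cost_ext c (n - 1) + cost_ext c n).

Definition MMS (n m : nat) (c : 'I_m -> R) : R :=
  inf [set x | exists A : {ffun 'I_m -> 'I_n},
                 x = \big[Num.max/0]_(j < n) bundle_cost c A j].

Definition r_order (n m : nat) (S : picking_order n m) : R :=
  sup [set x | exists (i : 'I_n) (c : 'I_m -> R),
                 [/\ valid_cost c, 0 < CS n c & x = bundle_cost c S i / CS n c]].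

Definition rho_order (n m : nat) (S : picking_order n m) : R :=
  sup [set x | exists (i : 'I_n) (c : 'I_m -> R),
                 [/\ valid_cost c, 0 < MMS n c & x = bundle_cost c S i / MMS n c]].

(* Ridge picking orders: S_r = r and S_(n+r) = n-r+1 for 1 <= r <= n
   (0-based: position p < n gets agent p, position n+q (q<n) gets agent n-1-q). *)
Definition ridge (n m : nat) (S : picking_order n m) : Prop :=
  forall p : 'I_m,
    ((p < n)%N -> nat_of_ord (S p) = nat_of_ord p) /\
    ((n <= p < 2 * n)%N -> nat_of_ord (S p) = (n - 1 - (p - n))%N).

Definition r_nm (n m : nat) : R :=
  inf [set x | exists S : picking_order n m, x = r_order S].
Definition rho_nm (n m : nat) : R :=
  inf [set x | exists S : picking_order n m, x = rho_order S].
Definition rhat_nm (n m : nat) : R :=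
  inf [set x | exists S : picking_order n m, ridge S /\ x = r_order S].

Definition r_n (n : nat) : R := sup [set x | exists m : nat, x = r_nm n m].
Definition rho_n (n : nat) : R := sup [set x | exists m : nat, x = rho_nm n m].
Definition rhat_n (n : nat) : R :=
  sup [set x | exists m : nat, (2 * n <= m)%N /\ x = rhat_nm n m].

End ChoreDivision.

(* Main.v *)
Require Import Defs.
From HB Require Import structures.
From mathcomp Require Import all_boot all_order all_algebra.
From mathcomp Require Import boolp classical_sets reals.
From mathcomp Require Import ring lra zify.
Import Order.TTheory GRing.Theory Num.Theory.

Set Implicit Arguments.
Unset Strict Implicit.
Unset Printing Implicit Defensive.

Definition ridge8 := [:: 0;1;2;3;3;2;1;0].
Definition Qb := [:: 3;2;1;3;2;2;0;1;3;2;3;1;2;3;0;2;1;3;2;0;1;3;2;3;2;1;0].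
Definition sq (p : nat) : nat :=
  if p < 8 then nth 0 ridge8 p else nth 0 Qb ((p - 8) %% 27).

Lemma nth_lt4 s k : all (fun x => x < 4) s -> nth 0 s k < 4.
Proof.
move=> Hs; case: (ltnP k (size s)) => hk; first by apply: (allP Hs); apply: mem_nth.
by rewrite nth_default.
Qed.

Lemma sq_lt4 p : sq p < 4.
Proof. by rewrite /sq; case: ifP => _; apply: nth_lt4. Qed.

Lemma sq_per k : 8 <= k -> sq (k + 27) = sq k.
Proof.
move=> hk; rewrite /sq ifF; last by apply/negbTE; rewrite -leqNgt; lia.
rewrite ifF; last by apply/negbTE; rewrite -leqNgt.
by rewrite (_ : k + 27 - 8 = (k - 8) + 27); [rewrite modnDr | lia].
Qed.

Definition Dp (i : nat) := nth 0 [:: 27; 9; 36; 27] i.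
Definition al (i : nat) := nth 0 [:: 4; 2; 13; 8] i.
Definition be (i : nat) := nth 0 [:: 23; 5; 0; 0] i.
Definition ga (i : nat) := nth 0 [:: 0; 0; 0; 7] i.

Definition Bnd i k := al i * k + (if 0 < k then be i else 0)
   + (if 3 < k then ga i else 0) + (if 4 < k then ga i else 0).
Definition Nk i k := count (fun p => sq p == i) (iota 0 k).

Lemma NkS i k : Nk i k.+1 = Nk i k + (sq k == i).
Proof. by rewrite /Nk -addn1 iotaD count_cat /= addn0. Qed.

Lemma BndS i k : Bnd i k.+1 = Bnd i k + (al i + be i * (k == 0) + ga i * ((k == 3) || (k == 4))).
Proof.
rewrite /Bnd.
case: k => [|[|[|[|[|k]]]]] /=; rewrite ?muln0 ?muln1 ?addn0; try lia.
Qed.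

Lemma window i k : 8 <= k ->
  count (fun p => sq p == i) (iota k 27) = count (fun p => sq p == i) (iota 8 27).
Proof.
move=> hk; rewrite -(subnKC hk); elim: (k - 8) => [|d IH]; first by [].
have e1 : iota (8 + d) 28 = (8 + d) :: iota (8 + d.+1) 27 by rewrite addnS.
have e2 : iota (8 + d) 28 = iota (8 + d) 27 ++ [:: 8 + d + 27] := iotaD (8 + d) 27 1.
have e3 : forall x, count (fun p => sq p == i) [:: x] = (sq x == i).
  by move=> x; rewrite /= addn0.
have := congr1 (count (fun p => sq p == i)) e1.
have e4 : forall x s, count (fun p => sq p == i) (x :: s) = (sq x == i) + count (fun p => sq p == i) s by [].
rewrite e2 count_cat e3 e4 sq_per ?leq_addr // IH.
move=> h; apply/eqP; rewrite -(eqn_add2l (sq (8 + d) == i)) -h addnC //.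
Qed.

Lemma small_ok : all (fun i => all (fun k => Dp i * Nk i k <= Bnd i k) (iota 0 36)) (iota 0 4).
Proof. by vm_compute. Qed.

Lemma period_ok : all (fun i => Dp i * count (fun p => sq p == i) (iota 8 27) <= 27 * al i) (iota 0 4).
Proof. by vm_compute. Qed.

Lemma Nk_bound i k : i < 4 -> Dp i * Nk i k <= Bnd i k.
Proof.
move=> hi; elim/ltn_ind: k => k IH.
have hi' : i \in iota 0 4 by rewrite mem_iota.
case: (ltnP k 36) => hk.
  have h2 := (allP small_ok).
  have h3 := (allP (h2 i hi')).
  by apply: h3; rewrite mem_iota.
have h4 := (allP period_ok).
have hp := h4 i hi'.
have ek : k = (k - 27) + 27 by lia.
have hw : Nk i k = Nk i (k - 27) + count (fun p => sq p == i) (iota 8 27).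
  by rewrite {1}ek /Nk iotaD count_cat add0n window //; lia.
have hIH : Dp i * Nk i (k - 27) <= Bnd i (k - 27) by apply: IH; lia.
rewrite hw mulnDr.
have eB : Bnd i k = Bnd i (k - 27) + 27 * al i.
  rewrite /Bnd !ifT; try (apply/idP; lia). lia.
lia.
Qed.

Definition killed (coll : seq (seq nat)) (l : seq nat) :=
  has (fun P => has (fun i => all (fun p => (p < size l) && (nth 0 l p == i)) P) (iota 0 4)) coll.

Fixpoint kdfs coll d l :=
  if killed coll l then true else
  (if d is d'.+1 then all (fun a => kdfs coll d' (rcons l a)) (iota 0 4) else false).

Lemma killed_cat coll l t : killed coll l -> killed coll (l ++ t).
Proof.
move/hasP=> [P PC /hasP [i hi /allP hP]]; apply/hasP; exists P => //; apply/hasP; exists i => //.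
apply/allP => p pP; have /andP [pl /eqP <-] := hP p pP.
by rewrite size_cat nth_cat pl eqxx andbT ltn_addr.
Qed.

Lemma dfs_sound coll d l : kdfs coll d l ->
  forall t, size t = d -> all (fun x => x < 4) t -> killed coll (l ++ t).
Proof.
elim: d l => [|d IH] l /=.
  by case: ifP => // hk _ [|//] _ _; rewrite cats0.
case: ifP => [hk _ t _ _|_ /and5P [h0 h1 h2 h3 _]]; first exact: killed_cat.
case=> [//|a t] /= [st] /andP [ha ht].
rewrite -cat_rcons; apply: IH => //.
by move: ha; case: a => [|[|[|[|]]]].
Qed.

Lemma dfs_all coll m : kdfs coll m [::] ->
  forall l, size l = m -> all (fun x => x < 4) l -> killed coll l.
Proof. by move=> h l sl al; have := dfs_sound h sl al. Qed.

Definition tot m cn := sumn (map (nth 0 cn) (iota 0 m)).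
Definition bPn m (P : seq nat) cn := sumn (map (fun r => (r \in P) * nth 0 cn r) (iota 0 m)).
Definition mono_ok m cn := all (fun r => nth 0 cn r.+1 <= nth 0 cn r) (iota 0 m).
Definition rcert_ok m (x : seq nat * seq nat) :=
  let (P, cn) := x in
  [&& size cn == m, mono_ok m cn, 0 < tot m cn, 13 * tot m cn <= 36 * bPn m P cn,
      13 * nth 0 cn 0 <= 9 * bPn m P cn & 13 * (nth 0 cn 3 + nth 0 cn 4) <= 9 * bPn m P cn]%N.
Definition binn m (A : seq nat) cn (j : nat) :=
  sumn (map (fun r => (nth 0 A r == j) * nth 0 cn r) (iota 0 m)).
Definition rhocert_ok m (x : seq nat * seq nat * seq nat) :=
  let: (P, cn, A) := x in
  [&& size cn == m, mono_ok m cn, 0 < bPn m P cn, all (fun x => x < 4) A &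
      all (fun j => 10 * binn m A cn j <= 7 * bPn m P cn) (iota 0 4)]%N.

Lemma mono_le m cn r s : mono_ok m cn -> (r <= s)%N -> (s < m)%N -> (nth 0 cn s <= nth 0 cn r)%N.
Proof.
move=> /allP hm; elim: s => [|s IH] hrs hs.
  by move: hrs; rewrite leqn0 => /eqP ->.
case: (ltngtP r s.+1) hrs => // [hr _|-> _ //].
apply: leq_trans (IH hr (ltnW hs)).
by apply: hm; rewrite mem_iota /= ltnW.
Qed.


Local Open Scope ring_scope.

Section Helpers.
Variable R : realType.
Implicit Types E : set R.

Lemma emptyE E : ~ (exists x, E x) -> E = set0.
Proof. by move=> nE; apply/seteqP; split => y //= Ey; apply: nE; exists y. Qed.

Lemma sup_le_H E a : (forall x, E x -> x <= a) -> 0 <= a -> sup E <= a.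
Proof.
move=> H a0; case: (pselect (exists x, E x)) => [[x Ex]|nE].
  by apply: ge_sup; [exists x | move=> y /H].
by rewrite (emptyE nE) sup0.
Qed.

Lemma le_sup_H E x B : E x -> (forall y, E y -> y <= B) -> x <= sup E.
Proof. move=> Ex HB; apply: ub_le_sup => //; by exists B => y /HB. Qed.

Lemma sup_ge0_H E B : (forall y, E y -> 0 <= y) -> (forall y, E y -> y <= B) -> 0 <= sup E.
Proof.
move=> H0 HB; case: (pselect (exists x, E x)) => [[x Ex]|nE].
  by apply: le_trans (H0 _ Ex) _; apply: le_sup_H Ex HB.
by rewrite (emptyE nE) sup0.
Qed.

Lemma inf_le_H E x b : E x -> (forall y, E y -> b <= y) -> inf E <= x.
Proof. move=> Ex Hb; apply: ge_inf => //; by exists b => y /Hb. Qed.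

Lemma le_inf_H E x a : E x -> (forall y, E y -> a <= y) -> a <= inf E.
Proof. by move=> Ex Ha; apply: lb_le_inf; [exists x | move=> y /Ha]. Qed.

End Helpers.

Section Basic.
Variable R : realType.



Lemma ce_val m (c : 'I_m -> R) (r : 'I_m) : cost_ext c r = c r.
Proof. by rewrite /cost_ext valK. Qed.

Lemma ce_out m (c : 'I_m -> R) k : (m <= k)%N -> cost_ext c k = 0.
Proof. by move=> mk; rewrite /cost_ext insubF // ltnNge mk. Qed.

Lemma ce_ge0 m (c : 'I_m -> R) k : valid_cost c -> 0 <= cost_ext c k.
Proof. by case=> c0 _; rewrite /cost_ext; case: insub. Qed.

Lemma ce_succ m (c : 'I_m -> R) k : valid_cost c -> cost_ext c k.+1 <= cost_ext c k.
Proof.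
move=> vc; case: (ltnP k.+1 m) => km.
  have km' : (k < m)%N by apply: ltnW.
  rewrite -[k.+1]/(nat_of_ord (Ordinal km)) -[k]/(nat_of_ord (Ordinal km')) !ce_val.
  by case: vc => _ /(_ (Ordinal km') (Ordinal km)); apply; rewrite /= leqnSn.
by rewrite ce_out // ce_ge0.
Qed.

Lemma bundleE m n (c : 'I_m -> R) (S : 'I_m -> 'I_n) i :
  bundle_cost c S i = \sum_(r < m) (if S r == i then c r else 0).
Proof. by rewrite /bundle_cost big_mkcond. Qed.

Lemma bundle_le_sum m n (c : 'I_m -> R) (S : 'I_m -> 'I_n) i :
  valid_cost c -> bundle_cost c S i <= \sum_(r < m) c r.
Proof.
case=> c0 _; rewrite bundleE; apply: ler_sum => r _.
by case: ifP => _ //; exact: c0.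
Qed.

Lemma sum_ge0 m (c : 'I_m -> R) : valid_cost c -> 0 <= \sum_(r < m) c r.
Proof. by case=> c0 _; apply: sumr_ge0 => r _; exact: c0. Qed.

Lemma CS_ge m (c : 'I_m -> R) :
  [/\ (\sum_(r < m) c r) / 4%:R <= CS 4 c, cost_ext c 0 <= CS 4 c &
      cost_ext c 3 + cost_ext c 4 <= CS 4 c].
Proof.
rewrite /CS; split.
- by rewrite !le_max lexx.
- by rewrite !le_max lexx orbT.
- by rewrite !le_max lexx orbT.
Qed.

Lemma ratio_r_bnd m (S : picking_order 4 m) i (c : 'I_m -> R) :
  valid_cost c -> 0 < CS 4 c ->
  0 <= bundle_cost c S i / CS 4 c <= 4%:R.
Proof.
move=> vc cs0; have [h1 _ _] := CS_ge c.
have hb := bundle_le_sum S i vc.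
have hb0 : 0 <= bundle_cost c S i.
  by rewrite bundleE; apply: sumr_ge0 => r _; case: ifP => //; case: vc.
apply/andP; split; first by apply: divr_ge0 => //; apply: ltW.
rewrite ler_pdivrMr //.
have : \sum_(r < m) c r <= 4%:R * CS 4 c.
  by rewrite mulrC -ler_pdivrMr.
lra.
Qed.

Lemma r_order_bnd m (S : picking_order 4 m) : 0 <= r_order R S <= 4%:R.
Proof.
apply/andP; split.
  apply: (@sup_ge0_H _ _ 4%:R).
    by move=> y [i [c [vc cs0 ->]]]; case/andP: (ratio_r_bnd S i vc cs0).
  by move=> y [i [c [vc cs0 ->]]]; case/andP: (ratio_r_bnd S i vc cs0).
apply: sup_le_H => //.
by move=> y [i [c [vc cs0 ->]]]; case/andP: (ratio_r_bnd S i vc cs0).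
Qed.

End Basic.

Section MMSsec.
Variable R : realType.

Definition maxbin m (c : 'I_m -> R) (A : 'I_m -> 'I_4) :=
  \big[Num.max/0]_(j < 4) bundle_cost c A j.

Lemma sum_bundles m (c : 'I_m -> R) (A : 'I_m -> 'I_4) :
  \sum_(j < 4) bundle_cost c A j = \sum_(r < m) c r.
Proof.
rewrite (partition_big A (fun _ => true)) //=.
Qed.

Lemma maxbin_ge0 m (c : 'I_m -> R) A : 0 <= maxbin c A.
Proof. exact: bigmax_ge_id. Qed.

Lemma maxbin_avg m (c : 'I_m -> R) A : (\sum_(r < m) c r) / 4%:R <= maxbin c A.
Proof.
rewrite ler_pdivrMr // -(sum_bundles c A).
have -> : maxbin c A * 4%:R = \sum_(j < 4) maxbin c A by rewrite sumr_const card_ord mulr_natr.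
by apply: ler_sum => j _; apply: le_bigmax.
Qed.

Lemma MMS_le m (c : 'I_m -> R) (A : {ffun 'I_m -> 'I_4}) : MMS 4 c <= maxbin c A.
Proof.
apply: (@inf_le_H _ _ _ 0); first by exists A.
by move=> y [B ->]; apply: maxbin_ge0.
Qed.

Lemma MMS_ge_avg m (c : 'I_m -> R) : (\sum_(r < m) c r) / 4%:R <= MMS 4 c.
Proof.
apply: (@le_inf_H _ _ (maxbin c [ffun => ord0])); first by exists [ffun => ord0].
by move=> y [B ->]; apply: maxbin_avg.
Qed.

Lemma ratio_rho_bnd m (S : picking_order 4 m) i (c : 'I_m -> R) :
  valid_cost c -> 0 < MMS 4 c ->
  0 <= bundle_cost c S i / MMS 4 c <= 4%:R.
Proof.
move=> vc cs0; have h1 := MMS_ge_avg c.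
have hb := bundle_le_sum S i vc.
have hb0 : 0 <= bundle_cost c S i.
  by rewrite bundleE; apply: sumr_ge0 => r _; case: ifP => //; case: vc.
apply/andP; split; first by apply: divr_ge0 => //; apply: ltW.
rewrite ler_pdivrMr //.
have : \sum_(r < m) c r <= 4%:R * MMS 4 c.
  by rewrite mulrC -ler_pdivrMr.
lra.
Qed.

Lemma rho_order_bnd m (S : picking_order 4 m) : 0 <= rho_order R S <= 4%:R.
Proof.
apply/andP; split.
  apply: (@sup_ge0_H _ _ 4%:R).
    by move=> y [i [c [vc cs0 ->]]]; case/andP: (ratio_rho_bnd S i vc cs0).
  by move=> y [i [c [vc cs0 ->]]]; case/andP: (ratio_rho_bnd S i vc cs0).
apply: sup_le_H => //.
by move=> y [i [c [vc cs0 ->]]]; case/andP: (ratio_rho_bnd S i vc cs0).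
Qed.

End MMSsec.

Section Upper.
Variable R : realType.

Lemma abel (w c : nat -> R) m t : 0 <= t ->
  (forall k, (k <= m)%N -> 0 <= t + \sum_(r < k) w r) ->
  (forall r, 0 <= c r) -> (forall r, c r.+1 <= c r) ->
  - (t * c 0%N) <= \sum_(r < m) w r * c r.
Proof.
elim: m w c t => [|m IH] w c t t0 hW c0 cS.
  by rewrite big_ord0 oppr_le0; apply: mulr_ge0.
rewrite big_ord_recl /=.
have t'0 : 0 <= t + w 0%N.
  by have := hW 1%N isT; rewrite big_ord_recl big_ord0 addr0.
have := IH (fun r => w r.+1) (fun r => c r.+1) (t + w 0%N) t'0.
have hW' : forall k, (k <= m)%N -> 0 <= t + w 0%N + \sum_(r < k) w r.+1.
  move=> k hk; have := hW k.+1 hk; rewrite big_ord_recl /=.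
  by move=> h; rewrite -addrA; exact: h.
move=> /(_ hW' (fun r => c0 r.+1) (fun r => cS r.+1)) h.
have : 0 <= (t + w 0%N) * (c 0%N - c 1%N) by apply: mulr_ge0 => //; rewrite subr_ge0.
have -> : \sum_(i < m) w (bump 0 i) * c (bump 0 i) = \sum_(r < m) w r.+1 * c r.+1 by [].
move: h; set s := \sum_(i < m) _.
move=> h1 h2. nra.
Qed.

Lemma sum_pick (f : nat -> R) (k j : nat) :
  \sum_(r < k) (nat_of_ord r == j)%:R * f r = if (j < k)%N then f j else 0.
Proof.
elim: k => [|k IH]; first by rewrite big_ord0.
rewrite big_ord_recr /= IH.
case: (ltngtP j k) => hjk.
- by rewrite ltnS (ltnW hjk) /= mul0r addr0.
- by rewrite ltnS leqNgt hjk /= mul0r addr0.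
- by rewrite hjk ltnSn /= mul1r add0r.
Qed.

Definition Sm m : picking_order 4 m := [ffun r : 'I_m => inord (sq r)].

Lemma Sm_val m (r : 'I_m) : nat_of_ord (Sm m r) = sq r.
Proof. by rewrite ffunE inordK // sq_lt4. Qed.

Definition wgt (i : nat) (r : nat) : R :=
  (al i)%:R + (be i)%:R * (r == 0%N)%:R + (ga i)%:R * ((r == 3%N) || (r == 4%N))%:R
  - (Dp i)%:R * (sq r == i)%:R.

Lemma prefix_w i k : \sum_(r < k) wgt i r = (Bnd i k)%:R - (Dp i * Nk i k)%:R.
Proof.
elim: k => [|k IH]; first by rewrite big_ord0 /Bnd /Nk /= !muln0 !addn0 subrr.
rewrite big_ord_recr /= IH BndS NkS mulnDr /wgt !natrD !natrM.
lra.
Qed.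

Lemma sum_pick_ce m (c : 'I_m -> R) j :
  \sum_(r < m) (nat_of_ord r == j)%:R * cost_ext c r = cost_ext c j.
Proof.
rewrite (sum_pick (cost_ext c)); case: ifP => // /negbT; rewrite -leqNgt => hm.
by rewrite ce_out.
Qed.

Lemma bundle_Sm m (c : 'I_m -> R) (i : 'I_4) :
  bundle_cost c (Sm m) i = \sum_(r < m) (sq r == i)%:R * cost_ext c r.
Proof.
rewrite bundleE; apply: eq_bigr => r _.
have -> : (Sm m r == i) = (sq r == i) by rewrite -(Sm_val r) val_eqE.
rewrite ce_val.
by case: (sq r == i); rewrite ?mul1r ?mul0r.
Qed.

Lemma key m (c : 'I_m -> R) (i : 'I_4) : valid_cost c ->
  (Dp i)%:R * bundle_cost c (Sm m) i <=
  (al i)%:R * \sum_(r < m) c r + (be i)%:R * cost_ext c 0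
  + (ga i)%:R * (cost_ext c 3 + cost_ext c 4).
Proof.
move=> vc.
have hab := @abel (wgt i) (cost_ext c) m 0 (lexx 0).
have h0 : 0 <= \sum_(r < m) wgt i r * cost_ext c r.
  have := hab _ (fun r => ce_ge0 r vc) (fun r => ce_succ r vc).
  rewrite mul0r oppr0; apply => k _.
  by rewrite add0r prefix_w subr_ge0 ler_nat; apply: Nk_bound.
have E : \sum_(r < m) wgt i r * cost_ext c r =
   (al i)%:R * \sum_(r < m) cost_ext c r
   + (be i)%:R * \sum_(r < m) (nat_of_ord r == 0%N)%:R * cost_ext c r
   + (ga i)%:R * (\sum_(r < m) (nat_of_ord r == 3%N)%:R * cost_ext c r
                + \sum_(r < m) (nat_of_ord r == 4%N)%:R * cost_ext c r)
   - (Dp i)%:R * \sum_(r < m) (sq r == i)%:R * cost_ext c r.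
  rewrite mulrDr !mulr_sumr -!big_split -sumrB /=; apply: eq_bigr => r _.
  rewrite /wgt.
  have -> : ((nat_of_ord r == 3%N) || (nat_of_ord r == 4%N))%:R
         = (nat_of_ord r == 3%N)%:R + (nat_of_ord r == 4%N)%:R :> R.
    by case: eqP => [->|] //=; rewrite ?add0r ?addr0.
  ring.
rewrite !sum_pick_ce -bundle_Sm in E.
have Es : \sum_(r < m) cost_ext c r = \sum_(r < m) c r.
  by apply: eq_bigr => r _; rewrite ce_val.
rewrite Es in E.
rewrite E in h0. lra.
Qed.

Lemma Sm_ratio m (c : 'I_m -> R) (i : 'I_4) : valid_cost c -> 0 < CS 4 c ->
  bundle_cost c (Sm m) i / CS 4 c <= 13%:R / 9%:R.
Proof.
move=> vc cs0; have hk := key i vc; have [h1 h2 h3] := CS_ge c.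
have hS : \sum_(r < m) c r <= 4%:R * CS 4 c by rewrite mulrC -ler_pdivrMr.
rewrite ler_pdivrMr // mulrAC ler_pdivlMr //.
move: hk; case: i => [[|[|[|[|k]]]] hi] //=; rewrite /Dp /al /be /ga /=; lra.
Qed.

Lemma r_Sm m : r_order R (Sm m) <= 13%:R / 9%:R.
Proof.
apply: sup_le_H; last by rewrite divr_ge0 ?ler0n.
by move=> y [i [c [vc cs0 ->]]]; apply: Sm_ratio.
Qed.

Lemma Sm_ridge m : ridge (Sm m).
Proof.
move=> p; split => [hp|/andP [hp1 hp2]]; rewrite Sm_val /sq.
  by rewrite ifT ?(ltn_trans hp) //; move: hp; case: (nat_of_ord p) => [|[|[|[|]]]].
rewrite ifT; last by move: hp2; rewrite mul2n -addnn.
move: hp1 hp2; case: (nat_of_ord p) => [|[|[|[|[|[|[|[|k]]]]]]]] //.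
Qed.

End Upper.
Section Certs.
Variable R : realType.
Local Open Scope ring_scope.

Lemma sum_nat_iota m (f : nat -> nat) :
  \sum_(r < m) (f r)%:R = (sumn (map f (iota 0 m)))%:R :> R.
Proof.
elim: m => [|m IH]; first by rewrite big_ord0.
have -> : iota 0 m.+1 = iota 0 m ++ [:: m] by rewrite -addn1 iotaD.
by rewrite big_ord_recr /= IH map_cat sumn_cat /= addn0 natrD.
Qed.

Definition cofn m (cn : seq nat) : 'I_m -> R := fun r => (nth 0%N cn r)%:R.
Arguments cofn : clear implicits.

Lemma cofn_valid m cn : mono_ok m cn -> valid_cost (cofn m cn).
Proof.
move=> hm; split => [r|r s hrs]; first exact: ler0n.
by rewrite ler_nat; apply: mono_le hm hrs _.
Qed.

Lemma cofn_ext m cn k : size cn = m -> cost_ext (cofn m cn) k = (nth 0%N cn k)%:R.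
Proof.
move=> sz; case: (ltnP k m) => hk.
  by rewrite -[k]/(nat_of_ord (Ordinal hk)) ce_val.
by rewrite ce_out // nth_default // sz.
Qed.

Lemma cofn_sum m cn : \sum_(r < m) cofn m cn r = (tot m cn)%:R.
Proof. exact: sum_nat_iota. Qed.

Lemma bundle_geP m n (S : 'I_m -> 'I_n) P cn i :
  (forall r : 'I_m, nat_of_ord r \in P -> S r = i) ->
  (bPn m P cn)%:R <= bundle_cost (cofn m cn) S i.
Proof.
move=> hP; rewrite bundleE -sum_nat_iota; apply: ler_sum => r _.
case hr: (nat_of_ord r \in P); rewrite /cofn.
  by rewrite (hP r hr) eqxx mul1n.
by rewrite mul0n; case: ifP.
Qed.

Lemma rcert_sound m (S : picking_order 4 m) P cn (i : 'I_4) :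
  rcert_ok m (P, cn) -> (forall r : 'I_m, nat_of_ord r \in P -> S r = i) ->
  13%:R / 9%:R <= r_order R S.
Proof.
move=> /and5P [/eqP sz hm ht h1 /andP [h2 h3]] hP.
pose c := cofn m cn.
have vc : valid_cost c := cofn_valid hm.
have hb := bundle_geP cn hP.
have [c1 c2 c3] := CS_ge c.
have ecs : CS 4 c <= 9%:R / 13%:R * (bPn m P cn)%:R.
  rewrite /CS (_ : (4 - 1)%N = 3%N) // !ge_max /c cofn_sum !cofn_ext //.
  move: h1 h2 h3; rewrite -!(ler_nat R) !natrM natrD => h1 h2 h3.
  apply/andP; split; first (apply/andP; split); lra.
have cs0 : 0 < CS 4 c.
  apply: lt_le_trans c1; rewrite /c cofn_sum divr_gt0 // ltr0n //.
apply: (@le_trans _ _ (bundle_cost c S i / CS 4 c)).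
  rewrite ler_pdivlMr //; lra.
apply: (le_sup_H (B := 4%:R)); first by exists i, c.
by move=> y [i' [c' [vc' cs0' ->]]]; case/andP: (ratio_r_bnd S i' vc' cs0').
Qed.

Lemma nth_lt4' (A : seq nat) k : all (fun x => x < 4)%N A -> (nth 0%N A k < 4)%N.
Proof.
move=> Hs; case: (ltnP k (size A)) => hk; first by apply: (allP Hs); apply: mem_nth.
by rewrite nth_default.
Qed.

Lemma rhocert_sound m (S : picking_order 4 m) P cn A (i : 'I_4) :
  rhocert_ok m (P, cn, A) -> (forall r : 'I_m, nat_of_ord r \in P -> S r = i) ->
  10%:R / 7%:R <= rho_order R S.
Proof.
move=> /and5P [/eqP sz hm hb0 hA hbin] hP.
pose c := cofn m cn.
have vc : valid_cost c := cofn_valid hm.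
have hb := bundle_geP cn hP.
have hbs := bundle_le_sum S i vc.
pose Aff : {ffun 'I_m -> 'I_4} := [ffun r : 'I_m => inord (nth 0%N A (nat_of_ord r))].
have ebin : forall j : 'I_4, bundle_cost c Aff j = (binn m A cn j)%:R.
  move=> j; rewrite bundleE -sum_nat_iota; apply: eq_bigr => r _.
  have -> : (Aff r == j) = (nth 0%N A r == j).
    by rewrite -val_eqE /Aff ffunE /= inordK // nth_lt4'.
  by case: (nth 0%N A r == j); rewrite ?mul1n ?mul0n.
have hmax : maxbin c Aff <= 7%:R / 10%:R * (bPn m P cn)%:R.
  apply: bigmax_le; first by apply: mulr_ge0; [apply: divr_ge0|apply: ler0n].
  move=> j _; rewrite ebin.
  have := (allP hbin) (nat_of_ord j); rewrite mem_iota /= => /(_ (ltn_ord j)).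
  rewrite -(ler_nat R) !natrM => h.
  lra.
have hmms := MMS_le c Aff.
have hb0' : 0 < (bPn m P cn)%:R :> R by rewrite ltr0n.
have mms0 : 0 < MMS 4 c.
  apply: lt_le_trans (MMS_ge_avg c); apply: divr_gt0 => //.
  by apply: lt_le_trans hbs; apply: lt_le_trans hb.
apply: (@le_trans _ _ (bundle_cost c S i / MMS 4 c)).
  rewrite ler_pdivlMr //; lra.
apply: (le_sup_H (B := 4%:R)); first by exists i, c.
by move=> y [i' [c' [vc' cs0' ->]]]; case/andP: (ratio_rho_bnd S i' vc' cs0').
Qed.

End Certs.

Definition rcerts : seq (seq nat * seq nat) := [:: 
  ([:: 0; 1], [:: 1; 1; 0; 0; 0; 0; 0; 0; 0; 0; 0]);
  ([:: 0; 2], [:: 1; 1; 1; 0; 0; 0; 0; 0; 0; 0; 0]);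
  ([:: 1; 2], [:: 1; 1; 1; 0; 0; 0; 0; 0; 0; 0; 0]);
  ([:: 0; 3], [:: 1; 1; 1; 1; 0; 0; 0; 0; 0; 0; 0]);
  ([:: 1; 3], [:: 1; 1; 1; 1; 0; 0; 0; 0; 0; 0; 0]);
  ([:: 2; 3], [:: 1; 1; 1; 1; 0; 0; 0; 0; 0; 0; 0]);
  ([:: 0; 4], [:: 2; 1; 1; 1; 1; 0; 0; 0; 0; 0; 0]);
  ([:: 1; 4], [:: 2; 2; 1; 1; 1; 0; 0; 0; 0; 0; 0]);
  ([:: 2; 4], [:: 2; 2; 2; 1; 1; 0; 0; 0; 0; 0; 0]);
  ([:: 0; 5], [:: 2; 1; 1; 1; 1; 1; 0; 0; 0; 0; 0]);
  ([:: 1; 5], [:: 2; 2; 1; 1; 1; 1; 0; 0; 0; 0; 0]);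
  ([:: 3; 4; 5], [:: 1; 1; 1; 1; 1; 1; 0; 0; 0; 0; 0]);
  ([:: 0; 6], [:: 2; 1; 1; 1; 1; 1; 1; 0; 0; 0; 0]);
  ([:: 2; 5; 6], [:: 1; 1; 1; 1; 1; 1; 1; 0; 0; 0; 0]);
  ([:: 3; 4; 6], [:: 1; 1; 1; 1; 1; 1; 1; 0; 0; 0; 0]);
  ([:: 1; 6; 7], [:: 1; 1; 1; 1; 1; 1; 1; 1; 0; 0; 0]);
  ([:: 2; 5; 7], [:: 1; 1; 1; 1; 1; 1; 1; 1; 0; 0; 0]);
  ([:: 3; 4; 7], [:: 1; 1; 1; 1; 1; 1; 1; 1; 0; 0; 0]);
  ([:: 0; 7; 8], [:: 2; 1; 1; 1; 1; 1; 1; 1; 1; 0; 0]);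
  ([:: 1; 6; 8], [:: 2; 2; 1; 1; 1; 1; 1; 1; 1; 0; 0]);
  ([:: 0; 7; 9], [:: 2; 1; 1; 1; 1; 1; 1; 1; 1; 1; 0]);
  ([:: 1; 6; 9], [:: 4; 4; 1; 1; 1; 1; 1; 1; 1; 1; 0]);
  ([:: 2; 5; 8; 9], [:: 1; 1; 1; 1; 1; 1; 1; 1; 1; 1; 0]);
  ([:: 3; 4; 8; 9], [:: 1; 1; 1; 1; 1; 1; 1; 1; 1; 1; 0]);
  ([:: 0; 7; 10], [:: 3; 1; 1; 1; 1; 1; 1; 1; 1; 1; 1]);
  ([:: 1; 6; 10], [:: 9; 9; 2; 2; 2; 2; 2; 2; 2; 2; 2]);
  ([:: 2; 5; 8; 10], [:: 1; 1; 1; 1; 1; 1; 1; 1; 1; 1; 1]);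
  ([:: 2; 5; 9; 10], [:: 1; 1; 1; 1; 1; 1; 1; 1; 1; 1; 1]);
  ([:: 3; 4; 8; 10], [:: 1; 1; 1; 1; 1; 1; 1; 1; 1; 1; 1]);
  ([:: 3; 4; 9; 10], [:: 1; 1; 1; 1; 1; 1; 1; 1; 1; 1; 1])].

Definition rhocerts : seq (seq nat * seq nat * seq nat) := [:: 
  ([:: 2; 5; 9; 10; 11], [:: 9; 9; 9; 9; 9; 9; 9; 9; 9; 9; 9; 9; 0; 0], [:: 0; 0; 0; 1; 1; 1; 2; 2; 2; 3; 3; 3; 0; 0]);
  ([:: 0; 7; 9], [:: 9; 9; 3; 3; 2; 2; 2; 2; 2; 2; 0; 0; 0; 0], [:: 0; 1; 2; 3; 2; 2; 2; 3; 3; 3; 0; 0; 0; 0]);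
  ([:: 3; 4; 8; 11; 12], [:: 9; 9; 9; 9; 9; 9; 9; 9; 9; 9; 6; 6; 6; 0], [:: 0; 0; 0; 1; 1; 1; 2; 2; 2; 3; 3; 3; 3; 0]);
  ([:: 3; 4; 8; 11; 13], [:: 9; 9; 9; 9; 9; 6; 6; 6; 6; 5; 5; 5; 4; 4], [:: 0; 0; 1; 1; 2; 2; 3; 3; 3; 0; 1; 3; 2; 2]);
  ([:: 3; 4; 8; 12; 13], [:: 9; 9; 9; 9; 9; 6; 6; 6; 6; 3; 3; 3; 3; 3], [:: 0; 0; 1; 1; 2; 2; 2; 3; 3; 0; 1; 3; 3; 3]);
  ([:: 1; 6; 8], [:: 9; 9; 5; 3; 2; 2; 2; 2; 2; 0; 0; 0; 0; 0], [:: 0; 1; 2; 3; 2; 2; 3; 3; 3; 0; 0; 0; 0; 0]);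
  ([:: 1; 5], [:: 9; 9; 5; 5; 4; 4; 0; 0; 0; 0; 0; 0; 0; 0], [:: 0; 1; 2; 3; 2; 3; 0; 0; 0; 0; 0; 0; 0; 0]);
  ([:: 1; 6; 7], [:: 9; 9; 9; 9; 9; 9; 9; 9; 0; 0; 0; 0; 0; 0], [:: 0; 0; 1; 1; 2; 2; 3; 3; 0; 0; 0; 0; 0; 0]);
  ([:: 0; 7; 12], [:: 9; 4; 3; 3; 3; 3; 3; 3; 1; 1; 1; 1; 1; 0], [:: 0; 1; 1; 2; 2; 2; 3; 3; 1; 1; 3; 3; 3; 0]);
  ([:: 0; 3], [:: 9; 9; 9; 9; 0; 0; 0; 0; 0; 0; 0; 0; 0; 0], [:: 0; 1; 2; 3; 0; 0; 0; 0; 0; 0; 0; 0; 0; 0]);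
  ([:: 1; 3], [:: 9; 9; 9; 9; 0; 0; 0; 0; 0; 0; 0; 0; 0; 0], [:: 0; 1; 2; 3; 0; 0; 0; 0; 0; 0; 0; 0; 0; 0]);
  ([:: 1; 6; 10], [:: 7; 7; 2; 2; 2; 2; 2; 1; 1; 1; 1; 0; 0; 0], [:: 0; 1; 2; 2; 2; 3; 3; 2; 3; 3; 3; 0; 0; 0]);
  ([:: 3; 4; 9; 11; 12], [:: 9; 9; 9; 9; 9; 9; 9; 9; 9; 9; 6; 6; 6; 0], [:: 0; 0; 0; 1; 1; 1; 2; 2; 2; 3; 3; 3; 3; 0]);
  ([:: 3; 4; 9; 11; 13], [:: 9; 9; 9; 9; 9; 5; 3; 3; 3; 3; 3; 3; 2; 2], [:: 0; 0; 1; 1; 2; 2; 3; 3; 3; 3; 3; 3; 2; 2]);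
  ([:: 3; 4; 9; 12; 13], [:: 9; 9; 9; 9; 9; 4; 4; 4; 4; 4; 4; 4; 4; 4], [:: 0; 0; 1; 2; 3; 1; 1; 1; 2; 2; 2; 3; 3; 3]);
  ([:: 2; 5; 8; 10; 12], [:: 9; 9; 9; 9; 9; 9; 9; 9; 9; 9; 9; 6; 4; 0], [:: 0; 0; 0; 1; 1; 1; 2; 2; 2; 3; 3; 3; 3; 0]);
  ([:: 0; 7; 10], [:: 9; 7; 3; 3; 2; 2; 2; 2; 2; 2; 2; 0; 0; 0], [:: 0; 1; 2; 3; 1; 2; 2; 2; 3; 3; 3; 0; 0; 0]);
  ([:: 2; 5; 7], [:: 9; 9; 9; 9; 9; 9; 9; 9; 0; 0; 0; 0; 0; 0], [:: 0; 0; 1; 1; 2; 2; 3; 3; 0; 0; 0; 0; 0; 0]);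
  ([:: 0; 7; 11], [:: 9; 5; 3; 3; 3; 3; 3; 3; 1; 1; 1; 1; 0; 0], [:: 0; 1; 1; 2; 2; 2; 3; 3; 1; 3; 3; 3; 0; 0]);
  ([:: 2; 5; 6], [:: 9; 9; 9; 9; 9; 9; 9; 0; 0; 0; 0; 0; 0; 0], [:: 0; 0; 1; 1; 2; 2; 3; 0; 0; 0; 0; 0; 0; 0]);
  ([:: 1; 6; 9], [:: 9; 9; 3; 3; 3; 3; 3; 1; 1; 1; 0; 0; 0; 0], [:: 0; 1; 2; 2; 2; 3; 3; 3; 3; 3; 0; 0; 0; 0]);
  ([:: 2; 5; 8; 9], [:: 9; 9; 9; 9; 9; 9; 6; 6; 6; 6; 0; 0; 0; 0], [:: 0; 0; 1; 1; 2; 3; 2; 2; 3; 3; 0; 0; 0; 0]);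
  ([:: 1; 2], [:: 9; 9; 9; 0; 0; 0; 0; 0; 0; 0; 0; 0; 0; 0], [:: 0; 1; 2; 0; 0; 0; 0; 0; 0; 0; 0; 0; 0; 0]);
  ([:: 1; 6; 12; 13], [:: 9; 9; 3; 2; 2; 2; 2; 1; 1; 1; 1; 1; 1; 1], [:: 0; 1; 2; 2; 2; 2; 3; 3; 3; 3; 3; 3; 3; 3]);
  ([:: 1; 6; 11; 13], [:: 9; 9; 3; 2; 2; 2; 2; 1; 1; 1; 1; 1; 1; 1], [:: 0; 1; 2; 2; 2; 2; 3; 3; 3; 3; 3; 3; 3; 3]);
  ([:: 0; 7; 8], [:: 9; 9; 5; 3; 2; 2; 2; 2; 2; 0; 0; 0; 0; 0], [:: 0; 1; 2; 3; 2; 2; 3; 3; 3; 0; 0; 0; 0; 0]);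
  ([:: 2; 4], [:: 9; 9; 9; 5; 4; 0; 0; 0; 0; 0; 0; 0; 0; 0], [:: 0; 1; 2; 3; 3; 0; 0; 0; 0; 0; 0; 0; 0; 0]);
  ([:: 1; 4], [:: 9; 9; 9; 5; 4; 0; 0; 0; 0; 0; 0; 0; 0; 0], [:: 0; 1; 2; 3; 3; 0; 0; 0; 0; 0; 0; 0; 0; 0]);
  ([:: 3; 4; 6], [:: 9; 9; 9; 9; 9; 9; 9; 0; 0; 0; 0; 0; 0; 0], [:: 0; 0; 1; 1; 2; 2; 3; 0; 0; 0; 0; 0; 0; 0]);
  ([:: 0; 2], [:: 9; 9; 9; 0; 0; 0; 0; 0; 0; 0; 0; 0; 0; 0], [:: 0; 1; 2; 0; 0; 0; 0; 0; 0; 0; 0; 0; 0; 0]);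
  ([:: 3; 4; 7], [:: 9; 9; 9; 9; 9; 9; 9; 9; 0; 0; 0; 0; 0; 0], [:: 0; 0; 1; 1; 2; 2; 3; 3; 0; 0; 0; 0; 0; 0]);
  ([:: 2; 5; 8; 10; 11], [:: 9; 9; 9; 9; 9; 9; 9; 9; 9; 9; 9; 9; 0; 0], [:: 0; 0; 0; 1; 1; 1; 2; 2; 2; 3; 3; 3; 0; 0]);
  ([:: 3; 4; 5], [:: 9; 9; 9; 9; 9; 9; 0; 0; 0; 0; 0; 0; 0; 0], [:: 0; 0; 1; 1; 2; 2; 0; 0; 0; 0; 0; 0; 0; 0]);
  ([:: 2; 5; 8; 10; 13], [:: 9; 9; 9; 9; 9; 9; 9; 9; 9; 9; 9; 3; 3; 3], [:: 0; 0; 0; 1; 1; 1; 2; 2; 2; 3; 3; 3; 3; 3]);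
  ([:: 0; 5], [:: 9; 9; 5; 5; 4; 4; 0; 0; 0; 0; 0; 0; 0; 0], [:: 0; 1; 2; 3; 2; 3; 0; 0; 0; 0; 0; 0; 0; 0]);
  ([:: 2; 5; 9; 10; 13], [:: 9; 9; 9; 9; 9; 9; 9; 9; 9; 9; 9; 3; 3; 3], [:: 0; 0; 0; 1; 1; 1; 2; 2; 2; 3; 3; 3; 3; 3]);
  ([:: 3; 4; 8; 10], [:: 9; 9; 9; 9; 9; 6; 6; 6; 6; 6; 6; 0; 0; 0], [:: 0; 0; 1; 2; 3; 1; 1; 2; 2; 3; 3; 0; 0; 0]);
  ([:: 0; 1], [:: 9; 9; 0; 0; 0; 0; 0; 0; 0; 0; 0; 0; 0; 0], [:: 0; 1; 0; 0; 0; 0; 0; 0; 0; 0; 0; 0; 0; 0]);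
  ([:: 2; 3], [:: 9; 9; 9; 9; 0; 0; 0; 0; 0; 0; 0; 0; 0; 0], [:: 0; 1; 2; 3; 0; 0; 0; 0; 0; 0; 0; 0; 0; 0]);
  ([:: 3; 4; 9; 10], [:: 9; 9; 9; 9; 9; 6; 6; 6; 6; 6; 6; 0; 0; 0], [:: 0; 0; 1; 2; 3; 1; 1; 2; 2; 3; 3; 0; 0; 0]);
  ([:: 0; 7; 13], [:: 9; 3; 3; 3; 3; 3; 3; 3; 1; 1; 1; 1; 1; 1], [:: 0; 1; 1; 1; 2; 2; 2; 3; 3; 3; 3; 3; 3; 3]);
  ([:: 0; 4], [:: 9; 9; 9; 5; 4; 0; 0; 0; 0; 0; 0; 0; 0; 0], [:: 0; 1; 2; 3; 3; 0; 0; 0; 0; 0; 0; 0; 0; 0]);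
  ([:: 3; 4; 8; 9], [:: 9; 9; 9; 9; 9; 9; 6; 6; 6; 6; 0; 0; 0; 0], [:: 0; 0; 1; 1; 2; 3; 2; 2; 3; 3; 0; 0; 0; 0]);
  ([:: 2; 5; 9; 10; 12], [:: 9; 9; 9; 9; 9; 9; 9; 9; 9; 9; 9; 6; 4; 0], [:: 0; 0; 0; 1; 1; 1; 2; 2; 2; 3; 3; 3; 3; 0]);
  ([:: 1; 6; 11; 12], [:: 9; 9; 4; 2; 2; 2; 2; 1; 1; 1; 1; 1; 1; 0], [:: 0; 1; 2; 2; 2; 3; 3; 2; 3; 3; 3; 3; 3; 0]);
  ([:: 0; 6], [:: 9; 5; 5; 5; 4; 4; 4; 0; 0; 0; 0; 0; 0; 0], [:: 0; 1; 2; 3; 1; 2; 3; 0; 0; 0; 0; 0; 0; 0])].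

Lemma rcerts_ok : all (rcert_ok 11) rcerts.
Proof. by vm_compute. Qed.
Lemma rcerts_dfs : kdfs (map fst rcerts) 11 [::].
Proof. by vm_compute. Qed.
Lemma rhocerts_ok : all (rhocert_ok 14) rhocerts.
Proof. by vm_compute. Qed.
Lemma rhocerts_dfs : kdfs (map (fun x => x.1.1) rhocerts) 14 [::].
Proof. by vm_compute. Qed.

Local Open Scope nat_scope.

Lemma from_killed m (S : picking_order 4 m) coll : kdfs coll m [::] ->
  exists P (i : 'I_4), P \in coll /\ forall r : 'I_m, nat_of_ord r \in P -> S r = i.
Proof.
move=> hd.
pose l := map (fun r : 'I_m => nat_of_ord (S r)) (enum 'I_m).
have sl : size l = m by rewrite size_map size_enum_ord.
have al : all (fun x => x < 4) l by apply/allP => x /mapP [r _ ->].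
have := dfs_all hd sl al.
move/hasP => [P PC /hasP [i0 hi0 hP0]].
have hi : i0 < 4 by rewrite mem_iota in hi0.
exists P, (Ordinal hi); split => // r rP.
have hP := (allP hP0) _ rP.
case/andP: hP => _ /eqP hn.
apply: val_inj => /=; rewrite -hn /l (nth_map r) ?size_enum_ord //.
by rewrite nth_ord_enum.
Qed.

Section Final.
Variable R : realType.
Local Open Scope ring_scope.

Lemma r11 (S : picking_order 4 11) : 13%:R / 9%:R <= r_order R S.
Proof.
have [P [i [PC hP]]] := @from_killed _ S _ rcerts_dfs.
case/mapP: PC => [[P' cn] hc /= eP]; subst P'.
apply: rcert_sound hP.
exact: (allP rcerts_ok _ hc).
Qed.

Lemma rho14 (S : picking_order 4 14) : 10%:R / 7%:R <= rho_order R S.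
Proof.
have [P [i [PC hP]]] := @from_killed _ S _ rhocerts_dfs.
case/mapP: PC => [[[P' cn] A] hc /= eP]; subst P'.
apply: rhocert_sound hP.
exact: (allP rhocerts_ok _ hc).
Qed.
End Final.
Section Assembly.
Variable R : realType.
Local Open Scope ring_scope.

Lemma c139_ge0 : 0 <= 13%:R / 9%:R :> R.
Proof. by rewrite divr_ge0 ?ler0n. Qed.

Lemma r_nm_le m : r_nm R 4 m <= 13%:R / 9%:R.
Proof.
apply: le_trans (r_Sm R m).
apply: (inf_le_H (b := 0)); first by exists (Sm m).
by move=> y [S ->]; case/andP: (r_order_bnd R S).
Qed.

Lemma r_nm11 : 13%:R / 9%:R <= r_nm R 4 11.
Proof.
apply: (le_inf_H (x := r_order R (Sm 11))); first by exists (Sm 11).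
by move=> y [S ->]; apply: r11.
Qed.

Lemma rhat_nm_le m : rhat_nm R 4 m <= 13%:R / 9%:R.
Proof.
apply: le_trans (r_Sm R m).
apply: (inf_le_H (b := 0)); first by exists (Sm m); split => //; apply: Sm_ridge.
by move=> y [S [_ ->]]; case/andP: (r_order_bnd R S).
Qed.

Lemma rhat_nm11 : 13%:R / 9%:R <= rhat_nm R 4 11.
Proof.
apply: (le_inf_H (x := r_order R (Sm 11))); first by exists (Sm 11); split => //; apply: Sm_ridge.
by move=> y [S [_ ->]]; apply: r11.
Qed.

Lemma rho_nm_le m : rho_nm R 4 m <= 4%:R.
Proof.
apply: le_trans (_ : rho_order R (Sm m) <= 4%:R); last by case/andP: (rho_order_bnd R (Sm m)).
apply: (inf_le_H (b := 0)); first by exists (Sm m).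
by move=> y [S ->]; case/andP: (rho_order_bnd R S).
Qed.

Lemma rho_nm14 : 10%:R / 7%:R <= rho_nm R 4 14.
Proof.
apply: (le_inf_H (x := rho_order R (Sm 14))); first by exists (Sm 14).
by move=> y [S ->]; apply: rho14.
Qed.

End Assembly.

Unset Implicit Arguments.
Local Open Scope ring_scope.

Theorem proposition3 (R : realType) :
  [/\ rhat_n R 4 = 13 / 9, r_n R 4 = 13 / 9 & 10 / 7 <= rho_n R 4].
Proof.
split.
- apply/eqP; rewrite eq_le; apply/andP; split.
    apply: sup_le_H; last exact: c139_ge0.
    by move=> y [m [_ ->]]; apply: rhat_nm_le.
  apply: le_trans (rhat_nm11 R) _.
  apply: (le_sup_H (B := 13%:R / 9%:R)); first by exists 11%N.
  by move=> y [m [_ ->]]; apply: rhat_nm_le.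
- apply/eqP; rewrite eq_le; apply/andP; split.
    apply: sup_le_H; last exact: c139_ge0.
    by move=> y [m ->]; apply: r_nm_le.
  apply: le_trans (r_nm11 R) _.
  apply: (le_sup_H (B := 13%:R / 9%:R)); first by exists 11%N.
  by move=> y [m ->]; apply: r_nm_le.
- apply: le_trans (rho_nm14 R) _.
  apply: (le_sup_H (B := 4%:R)); first by exists 14%N.
  by move=> y [m ->]; apply: rho_nm_le.
Qed.
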